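(* For every integer $n\ge0$, $U_n(x,y,a;q)=\mathbb{F}(aD_{xy})\{P_n(x,y)\}$.
   Context: $q$ is a fixed complex number with $0<|q|<1$; $(a;q)_n=\prod_{i=0}^{n-1}(1-aq^i)$; ${n\brack k}=\frac{(q;q)_n}{(q;q)_k(q;q)_{n-k}}$. $P_n(x,y)=\prod_{i=0}^{n-1}(x-q^iy)$ and $U_n(x,y,a;q)=\sum_{k=0}^n{n\brack k}(-1)^kq^{\binom k2}a^kP_{n-k}(x,y)$. The homogeneous $q$-difference operator acting on functions of $(x,y)$ is $D_{xy}\{f(x,y)\}=\frac{f(x,q^{-1}y)-f(qx,y)}{x-q^{-1}y}$, and the homogeneous $q$-shift operator is $\mathbb{F}(aD_{xy})=\sum_{n=0}^\infty\frac{(-1)^nq^{\binom n2}(aD_{xy})^n}{(q;q)_n}$ (with $D_{xy}^0$ the identity). *)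

(* Defs.v *)
From HB Require Import structures.
From mathcomp Require Import all_boot all_order all_algebra.
From mathcomp Require Import reals complex.
Set Implicit Arguments. Unset Strict Implicit. Unset Printing Implicit Defensive.
Import Order.TTheory GRing.Theory Num.Theory.
Local Open Scope ring_scope.

Section Defs.
Variable R : realType.
Local Notation C := R[i].

Definition qpoch (a q : C) (n : nat) : C := \prod_(i < n) (1 - a * q ^+ i).

Definition qbinom (q : C) (n k : nat) : C :=
  qpoch q q n / (qpoch q q k * qpoch q q (n - k)).

Definition Pn (q : C) (n : nat) (x y : C) : C := \prod_(i < n) (x - q ^+ i * y).

Definition Un (q : C) (n : nat) (x y a : C) : C :=
  \sum_(k < n.+1) qbinom q n k * (-1) ^+ k * q ^+ 'C(k, 2) * a ^+ k * Pn q (n - k) x y.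

Definition Dxy (q : C) (f : C -> C -> C) : C -> C -> C :=
  fun x y => (f x (q^-1 * y) - f (q * x) y) / (x - q^-1 * y).

(* k-th term of F(aD_xy){f} evaluated at (x,y):
   (-1)^k q^{binom k 2} (aD_xy)^k f / (q;q)_k, with (aD)^k = a^k D^k, D^0 = id *)
Definition Fterm (q a : C) (f : C -> C -> C) (k : nat) (x y : C) : C :=
  (-1) ^+ k * q ^+ 'C(k, 2) * (a ^+ k * iter k (Dxy q) f x y) / qpoch q q k.

Definition series_sums (u : nat -> C) (l : C) : Prop :=
  forall eps : C, 0 < eps -> exists N : nat, forall m : nat, (N <= m)%N ->
    `| \sum_(k < m) u k - l | < eps.

(* F(aD_xy){f}(x,y) = l, i.e. the defining series converges to l *)
Definition Fshift_eval (q a : C) (f : C -> C -> C) (x y l : C) : Prop :=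
  series_sums (fun k => Fterm q a f k x y) l.

End Defs.

(* Main.v *)
Require Import Defs.
From HB Require Import structures.
From mathcomp Require Import all_boot all_order all_algebra.
From mathcomp Require Import reals complex.
From mathcomp Require Import ring.
Import Order.TTheory GRing.Theory Num.Theory.
Local Open Scope ring_scope.

Section Aux.
Variable R : realType.
Local Notation C := R[i].
Variable q : C.
Hypothesis q0 : q != 0.
Hypothesis q1 : `|q| < 1.

Definition gen (x y : C) := forall m : int, x != q ^ m * y.

Lemma qU : q \is a GRing.unit. Proof. by rewrite unitfE. Qed.

Lemma gen_l x y : gen x y -> gen x (q^-1 * y).
Proof.
move=> h m; rewrite mulrA -exprN1 -exprzDr ?qU //; apply: h.
Qed.

Lemma gen_r x y : gen x y -> gen (q * x) y.
Proof.
move=> h m; apply/negP => /eqP E.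
have Ex : x = q^-1 * (q ^ m * y) by rewrite -E mulrA mulVf // mul1r.
have := h (m - 1); rewrite exprzDr ?qU // exprN1 {1}Ex.
by rewrite mulrA [q^-1 * _]mulrC eqxx.
Qed.

Lemma gen_ne x y : gen x y -> x - q^-1 * y != 0.
Proof. by move=> h; rewrite subr_eq0 -exprN1; apply: h. Qed.

Lemma D_P m x y : x - q^-1 * y != 0 ->
  Dxy q (Pn q m) x y = (1 - q ^+ m) * Pn q m.-1 x y.
Proof.
move=> hne; rewrite /Dxy; case: m => [|m].
  by rewrite /Pn !big_ord0 expr0 !subrr mul0r mul0r.
rewrite /Pn !big_ord_recl /=.
have E1 : \prod_(i < m) (x - q ^+ (bump 0 i) * (q^-1 * y)) = \prod_(i < m) (x - q ^+ i * y).
  by apply: eq_bigr => i _; rewrite /bump leq0n add1n exprS -mulrA (mulrCA (q^+i)) mulVKf.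
have E2 : \prod_(i < m) (q * x - q ^+ (bump 0 i) * y) = q ^+ m * \prod_(i < m) (x - q ^+ i * y).
  rewrite -[X in q ^+ X]card_ord -prodr_const -big_split /=; apply: eq_bigr => i _.
  by rewrite /bump leq0n add1n exprS mulrBr mulrA.
rewrite E1 E2 expr0 !mul1r.
apply: (mulIf hne); rewrite divfK //.
have -> : q * x - y = q * (x - q^-1 * y) by rewrite mulrBr mulrA mulfV // mul1r.
rewrite exprS; ring.
Qed.


Definition cc (n k : nat) : C := \prod_(i < k) (1 - q ^+ (n - i)).

Lemma iterD n k : forall x y, gen x y ->
  iter k (Dxy q) (Pn q n) x y = cc n k * Pn q (n - k) x y.
Proof.
elim: k => [|k IH] x y hg.
  by rewrite /cc big_ord0 mul1r subn0.
rewrite /= {1}/Dxy (IH x (q^-1 * y) (gen_l x y hg)) (IH (q * x) y (gen_r x y hg)).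
rewrite -mulrBr -mulrA.
have := D_P (n - k) x y (gen_ne x y hg); rewrite /Dxy => ->.
rewrite /cc big_ord_recr /= subnS; ring.
Qed.

Lemma pow_ne1 j : q ^+ j.+1 != 1.
Proof.
apply/negP => /eqP E.
have : `|q| ^+ j.+1 < 1 by rewrite exprn_ilt1.
by rewrite -normrX E normr1 ltxx.
Qed.

Lemma qpoch_ne0 j : qpoch q q j != 0.
Proof.
rewrite /qpoch; apply/prodf_neq0 => i _.
by rewrite subr_eq0 eq_sym -exprS pow_ne1.
Qed.

Lemma cc_le n k : (k <= n)%N -> cc n k * qpoch q q (n - k) = qpoch q q n.
Proof.
elim: k => [|k IH] hk; first by rewrite /cc big_ord0 mul1r subn0.
have hk' : (k <= n)%N by apply: ltnW.
rewrite -IH // /cc big_ord_recr /=.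
have -> : (n - k = (n - k.+1).+1)%N by rewrite subnS prednK // subn_gt0.
rewrite /qpoch big_ord_recr /= -exprS; ring.
Qed.

Lemma cc_gt n k : (n < k)%N -> cc n k = 0.
Proof.
elim: k => [//|k IH] hk.
rewrite /cc big_ord_recr /=.
move: hk; rewrite ltnS leq_eqVlt => /orP [/eqP <-|lt].
  by rewrite subnn expr0 subrr mulr0.
by rewrite -/(cc n k) IH // mul0r.
Qed.

End Aux.

Theorem mainTheorem4 (R : realType) (q : R[i]) (hq0 : 0 < `|q|) (hq1 : `|q| < 1)
  (n : nat) (a x y : R[i])
  (hgen : forall m : int, x != q ^ m * y) :
  Fshift_eval q a (Pn q n) x y (Un q n x y a).
Proof.
have q0 : q != 0 by rewrite -normr_gt0.
move=> eps he; exists n.+1 => m hm.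
suff -> : \sum_(k < m) Fterm q a (Pn q n) k x y = Un q n x y a by rewrite subrr normr0.
rewrite -(subnKC hm) big_split_ord /=.
rewrite [X in _ + X]big1 ?addr0; last first.
  move=> i _; rewrite /Fterm (iterD _ _ q0 _ _ _ _ hgen) cc_gt //=; last by rewrite ltnS leq_addr.
  by rewrite mul0r mulr0 mulr0 mul0r.
apply: eq_bigr => i _; rewrite /Fterm (iterD _ _ q0 _ _ _ _ hgen) /qbinom.
have hi : (i <= n)%N by rewrite -ltnS.
rewrite -(cc_le _ q n _ hi).
have h1 := qpoch_ne0 _ _ hq1 i; have h2 := qpoch_ne0 _ _ hq1 (n - i).
field.
by rewrite h1 h2.
Qed.
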